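(* For any $0\le\epsilon<1$ and any integer $m>1$, $$\rho\Big((1-\epsilon)|\Psi\rangle\langle\Psi|+\epsilon\,\frac{\mathrm{id}_m}{m}\otimes\frac{\mathrm{id}_m}{m}\Big)=1-\epsilon,$$ where $|\Psi\rangle=\frac1{\sqrt m}\sum_{i=0}^{m-1}|i,i\rangle$ is the $m$-dimensional maximally entangled state.
   Context: For a bipartite state $\psi_{AB}$ on $\mathbb{C}^{m}\otimes\mathbb{C}^{m}$ with $\psi_A=\psi_B=\mathrm{id}_m/m$, its maximal correlation is $\rho(\psi_{AB})=\sup\{|\mathrm{Tr}((P^\dagger\otimes Q)\psi_{AB})|: P,Q\in\mathcal{M}_m,\ \mathrm{Tr}P=\mathrm{Tr}Q=0,\ \tfrac1m\mathrm{Tr}P^\dagger P=\tfrac1m\mathrm{Tr}Q^\dagger Q=1\}$, where $\mathcal{M}_m$ is the space of complex $m\times m$ matrices. *)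

(* Defs.v *)
From HB Require Import structures.
From mathcomp Require Import all_boot all_order all_algebra.
From mathcomp Require Import classical_sets reals.
From mathcomp Require Import complex mxtens.
Set Implicit Arguments. Unset Strict Implicit. Unset Printing Implicit Defensive.
Import Order.TTheory GRing.Theory Num.Theory.
Local Open Scope ring_scope.
Local Open Scope classical_set_scope.

Definition dagger (R : realType) (p q : nat) (P : 'M[R[i]]_(p, q)) : 'M[R[i]]_(q, p) :=
  (map_mx (@conjc R) P)^T.

(* Maximal correlation of a bipartite state psi on C^m (x) C^m, encoded as an
   (m*m) x (m*m) matrix; the basis vector |i,j> has index mxtens_index (i,j),
   consistent with the Kronecker product A *t B. *)
Definition maxcorr (R : realType) (m : nat) (psi : 'M[R[i]]_(m * m)) : R :=
  sup [set r : R | exists P Q : 'M[R[i]]_m,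
         [/\ \tr P = 0, \tr Q = 0,
             (m%:R)^-1 * \tr (dagger P *m P) = 1,
             (m%:R)^-1 * \tr (dagger Q *m Q) = 1 &
             r = ComplexField.Normc.normc (\tr ((dagger P *t Q) *m psi))]].

Definition maxent_ket (R : realType) (m : nat) : 'cV[R[i]]_(m * m) :=
  \col_k (if (mxtens_unindex k).1 == (mxtens_unindex k).2
          then (((Num.sqrt (m%:R : R))^-1)%:C)%C else 0).

Definition isotropic_state (R : realType) (m : nat) (eps : R) : 'M[R[i]]_(m * m) :=
  ((1 - eps)%:C)%C *: (maxent_ket R m *m dagger (maxent_ket R m))
  + (eps%:C)%C *: (((m%:R)^-1 *: (1%:M : 'M[R[i]]_m)) *t ((m%:R)^-1 *: (1%:M : 'M[R[i]]_m))).
Arguments maxent_ket : clear implicits.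
Arguments isotropic_state : clear implicits.

(* Main.v *)
Require Import Defs.
From HB Require Import structures.
From mathcomp Require Import all_boot all_order all_algebra.
From mathcomp Require Import classical_sets reals.
From mathcomp Require Import complex mxtens.
Import Order.TTheory GRing.Theory Num.Theory.
Local Open Scope ring_scope.

Section H.
Variable R : realType.
Local Notation C := (R[i]).

Lemma sum_tens (n1 n2 : nat) (F : 'I_(n1 * n2) -> C) :
  \sum_(k < n1 * n2) F k = \sum_(i < n1) \sum_(j < n2) F (mxtens_index (i, j)).
Proof.
rewrite pair_big /=.
rewrite (reindex (@mxtens_index n1 n2)) /=; last first.
  by exists (@mxtens_unindex n1 n2) => x _; rewrite (mxtens_indexK, mxtens_unindexK).
by apply: eq_bigr => -[i j].
Qed.

Lemma sum_if n (i : 'I_n) (F : 'I_n -> C) :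
  \sum_(j < n) (if i == j then F j else 0) = F i.
Proof.
rewrite (bigD1 i) //= eqxx big1 ?addr0 // => j /negbTE.
by rewrite eq_sym => ->.
Qed.

Lemma tr_tens n1 n2 (A : 'M[C]_n1) (B : 'M[C]_n2) : \tr (A *t B) = \tr A * \tr B.
Proof.
rewrite /mxtrace sum_tens mulr_suml; apply: eq_bigr => i _.
rewrite mulr_sumr; apply: eq_bigr => j _.
by rewrite tensmxE.
Qed.

Lemma normCE (z : C) : `|z| = (ComplexField.Normc.normc z)%:C%C.
Proof. case: z => a b; rewrite normc_def /=; reflexivity. Qed.

Lemma mulJ (z : C) : z * conjc z = `|z| ^+ 2.
Proof. rewrite -add_Re2_Im2; case: z => a b; simpc; rewrite /= !expr2 [b * a]mulrC addNr; reflexivity. Qed.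

Lemma normJ (z : C) : `|conjc z| = `|z|.
Proof. by rewrite !normc_def; case: z => a b /=; rewrite sqrrN. Qed.

End H.

Section Main.
Variable R : realType.
Variable m : nat.
Local Notation C := (R[i]).
Local Notation v := (maxent_ket R m).
Local Notation c := (((Num.sqrt (m%:R : R))^-1)%:C)%C.

Lemma ket_entry (i j : 'I_m) : v (mxtens_index (i, j)) 0 = if i == j then c else 0.
Proof. by rewrite mxE mxtens_indexK. Qed.

Lemma cc : conjc c * c = (m%:R)^-1.
Proof.
rewrite conjc_real -rmorphM /= -expr2 exprVn sqr_sqrtr ?ler0n //.
by rewrite fmorphV rmorph_nat.
Qed.

Lemma tr_rank1 (A : 'M[C]_(m * m)) :
  \tr (A *m (v *m dagger v)) =
  (m%:R)^-1 * \sum_(i < m) \sum_(k < m) A (mxtens_index (i, i)) (mxtens_index (k, k)).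
Proof.
rewrite mulmxA mxtrace_mulC /mxtrace big_ord1 mxE sum_tens /dagger.
have inner : forall x, (A *m v) x 0 = c * \sum_(k < m) A x (mxtens_index (k, k)).
  move=> x; rewrite mxE sum_tens mulr_sumr; apply: eq_bigr => k _.
  rewrite -(@sum_if R _ k (fun l => c * A x (mxtens_index (k, l)))); apply: eq_bigr => l _.
  rewrite ket_entry; case: eqP => [<-|_]; by rewrite ?mulr0 // mulrC.
rewrite -cc mulr_sumr; apply: eq_bigr => i _.
rewrite -mulrA -inner -(@sum_if R _ i (fun j => conjc c * (A *m v) (mxtens_index (i, j)) 0)).
apply: eq_bigr => j _; rewrite [X in X * _]mxE [X in X * _]mxE ket_entry.
case: eqP => [<-|_]; last by rewrite conjc0 mul0r.
by rewrite inner mulrA.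
Qed.


Lemma tr_iso (eps : R) (P Q : 'M[C]_m) : \tr Q = 0 ->
  \tr ((dagger P *t Q) *m isotropic_state R m eps) =
  ((1 - eps)%:C)%C * ((m%:R)^-1 * \sum_(i < m) \sum_(k < m) conjc (P k i) * Q i k).
Proof.
move=> hQ; rewrite /isotropic_state mulmxDr -!scalemxAr mxtraceD !mxtraceZ.
rewrite tensmx_mul tr_tens !scalemx1 !mul_mx_scalar !mxtraceZ hQ !mulr0 addr0.
rewrite tr_rank1; congr (_ * (_ * _)); apply: eq_bigr => i _; apply: eq_bigr => k _.
by rewrite tensmxE /dagger !mxE.
Qed.

Lemma tr_gram (P : 'M[C]_m) :
  \tr (dagger P *m P) = \sum_(i < m) \sum_(k < m) `|P k i| ^+ 2.
Proof.
rewrite /mxtrace; apply: eq_bigr => i _; rewrite mxE; apply: eq_bigr => k _.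
by rewrite /dagger !mxE mulrC mulJ.
Qed.

Lemma Sbound (P Q : 'M[C]_m) :
  \tr (dagger P *m P) = m%:R -> \tr (dagger Q *m Q) = m%:R ->
  `|\sum_(i < m) \sum_(k < m) conjc (P k i) * Q i k| <= m%:R.
Proof.
move=> hP hQ.
have h : `|\sum_(i < m) \sum_(k < m) conjc (P k i) * Q i k| *+ 2 <= (m%:R : C) *+ 2.
  rewrite [X in _ <= X]mulr2n -{1}hP -hQ !tr_gram [X in _ <= _ + X]exchange_big /= -big_split /=.
  apply: le_trans (_ : (\sum_i \sum_k `|P k i| * `|Q i k|) *+ 2 <= _).
    rewrite lerMn2r /=; apply: le_trans (ler_norm_sum _ _ _) _.
    apply: ler_sum => i _; apply: le_trans (ler_norm_sum _ _ _) _.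
    by apply: ler_sum => k _; rewrite normrM normJ.
  rewrite -sumrMnl; apply: ler_sum => i _; rewrite -sumrMnl -big_split /=.
  apply: ler_sum => k _.
  exact: (real_leif_mean_square_scaled (normr_real _) (normr_real _)).1.
by move: h; rewrite lerMn2r.
Qed.

Lemma sum_delta (a b : 'I_m) (F : 'I_m -> 'I_m -> C) :
  (forall i k, (i != a) || (k != b) -> F i k = 0) ->
  \sum_(i < m) \sum_(k < m) F i k = F a b.
Proof.
move=> H; rewrite (bigD1 a) //= (bigD1 b) //= big1 ?addr0; last first.
  by move=> k hk; apply: H; rewrite hk orbT.
rewrite [X in _ + X]big1 ?addr0 // => i hi; apply: big1 => k _; apply: H.
by rewrite hi.
Qed.

Lemma normC_real (x : R) : 0 <= x -> ComplexField.Normc.normc (x%:C)%C = x.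
Proof.
move=> hx; apply: complexI; rewrite -normCE ger0_norm //.
by rewrite ler0c.
Qed.

Lemma wit (eps x : R) : (0 < m)%N -> 0 <= 1 - eps -> x * x = m%:R ->
  ComplexField.Normc.normc (((1 - eps)%:C)%C * ((m%:R)^-1 * (conjc ((x%:C)%C) * (x%:C)%C))) = 1 - eps.
Proof.
move=> hm he hx; rewrite conjc_real -rmorphM /= hx rmorph_nat mulVf ?mulr1 ?normC_real //.
by rewrite pnatr_eq0 -lt0n.
Qed.
End Main.


Theorem lemma3p9 (R : realType) (m : nat) (eps : R) :
  0 <= eps -> eps < 1 -> (1 < m)%N ->
  maxcorr (isotropic_state R m eps) = 1 - eps.
Proof.
move=> he0 he1 hm.
have hm0 : (0 < m)%N by apply: ltn_trans hm.
have hmC : (m%:R : R[i]) != 0 by rewrite pnatr_eq0 -lt0n.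
have hmC' : (0 : R[i]) < m%:R by rewrite ltr0n.
have h1e : (0 : R) <= 1 - eps by rewrite subr_ge0 ltW.
rewrite /maxcorr; set E := (X in sup X).
have ub : forall r, E r -> r <= 1 - eps.
  move=> r [P [Q [hP hQ hPP hQQ ->]]].
  have gP : \tr (dagger P *m P) = m%:R by rewrite -(mulVKf hmC (\tr _)) hPP mulr1.
  have gQ : \tr (dagger Q *m Q) = m%:R by rewrite -(mulVKf hmC (\tr _)) hQQ mulr1.
  rewrite -lecR -normCE tr_iso // normrM normrM normfV normr_nat ger0_norm ?ler0c //.
  rewrite -[X in _ <= X]mulr1 ler_wpM2l ?ler0c // ler_pdivrMl // mulr1.
  exact: Sbound.
have inE : E (1 - eps).
  pose s : R[i] := ((Num.sqrt (m%:R : R))%:C)%C.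
  have ss : s * s = m%:R by rewrite -rmorphM /= -expr2 sqr_sqrtr ?ler0n // rmorph_nat.
  have ns : `|s| = s by rewrite ger0_norm // ler0c sqrtr_ge0.
  have js : conjc s = s by rewrite conjc_real.
  pose i0 : 'I_m := Ordinal hm0.
  pose i1 : 'I_m := Ordinal hm.
  have i01 : i0 != i1 by [].
  have trd : forall a b : 'I_m, a != b -> \tr (delta_mx a b : 'M[R[i]]_m) = 0.
    move=> a b hab; apply: big1 => i _; rewrite mxE.
    by case: (eqVneq i a) => [->|]; rewrite ?(negbTE hab) ?andbF.
  exists (s *: delta_mx i0 i1), (s *: delta_mx i1 i0); split.
  - by rewrite mxtraceZ trd ?mulr0.
  - by rewrite mxtraceZ trd ?mulr0 // eq_sym.
  - rewrite tr_gram (@sum_delta R m i1 i0) ?mxE ?eqxx /= ?mulr1 ?ns ?expr2 ?ss ?mulVf //.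
    by move=> i k; rewrite !mxE => /orP[] /negbTE ->; rewrite ?andbF ?andFb mulr0 normr0 expr0n.
  - rewrite tr_gram (@sum_delta R m i0 i1) ?mxE ?eqxx /= ?mulr1 ?ns ?expr2 ?ss ?mulVf //.
    by move=> i k; rewrite !mxE => /orP[] /negbTE ->; rewrite ?andbF ?andFb mulr0 normr0 expr0n.
  - rewrite tr_iso; last by rewrite mxtraceZ trd ?mulr0 // eq_sym.
    rewrite (@sum_delta R m i1 i0) ?mxE ?eqxx ?andbT ?mulr1n ?mulr1 /s. rewrite [conjc _](_ : _ = (Num.sqrt (m%:R : R))%:C%C); last by rewrite /conjc /= oppr0. rewrite -rmorphM /= -expr2 sqr_sqrtr ?ler0n // rmorph_nat mulVf ?mulr1 ?normC_real //.
    by move=> i k; rewrite !mxE => /orP[] /negbTE ->; rewrite ?andbF ?andFb mulr0 ?conjc0 ?mul0r ?mulr0.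
apply: le_anti; apply/andP; split.
  by apply: ge_sup; [exists (1 - eps) | move=> r /ub].
by apply: ub_le_sup => //; exists (1 - eps) => r /ub.
Qed.
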